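(* Let $P_1=\langle v_1\rangle_{\mathbb{F}_{q^n}}$ and $P_2=\langle v_2\rangle_{\mathbb{F}_{q^n}}$ be points of $\mathrm{PG}(1,q^n)$ and let $f(x)\in\mathbb{F}_{q^n}[x]$ be a scattered polynomial. If $v_1$ and $v_2$ are eigenvectors of all matrices in $G_f$ and $G_f^\circ$ is not isomorphic to $\mathbb{F}_q$, then $P_1\notin L_f$ and $P_2\notin L_f$.
   Context: Let $q$ be a prime power and $n>1$. A $q$-polynomial $f(x)=\sum_{i=0}^{n-1}a_ix^{q^i}\in\mathbb{F}_{q^n}[x]$ is scattered if for all $y,z\in\mathbb{F}_{q^n}$, $zf(y)-yf(z)=0$ implies $y,z$ are $\mathbb{F}_q$-linearly dependent. $U_f=\{(x,f(x))\colon x\in\mathbb{F}_{q^n}\}$ and $L_f=\{\langle(x,f(x))\rangle_{\mathbb{F}_{q^n}}\colon x\in\mathbb{F}_{q^n}^*\}\subseteq\mathrm{PG}(1,q^n)$. Nonsingular $A\in\mathbb{F}_{q^n}^{2\times2}$ acts as $(x,y)\mapsto(x,y)A$ (so eigenvectors are row vectors $v$ with $vA=\lambda v$); $G_f=\{A\in\mathrm{GL}(2,q^n)\colon U_fA=U_f\}$ and $G_f^\circ=G_f\cup\{O\}$ with $O$ the zero matrix; $G_f^\circ$ is a field under matrix operations. *)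

(* Defs.v *)
From HB Require Import structures.
From mathcomp Require Import all_boot all_order all_algebra.
Set Implicit Arguments. Unset Strict Implicit. Unset Printing Implicit Defensive.
Import GRing.Theory.
Local Open Scope ring_scope.

Section Defs.
Variable L : finFieldType.

Definition Fq (q : nat) : {set L} := [set x : L | x ^+ q == x].

Definition qlinpoly (q n : nat) (a : 'I_n -> L) (x : L) : L :=
  \sum_(i < n) a i * x ^+ (q ^ i).

Definition Fq_dep (q : nat) (y z : L) : Prop :=
  exists a b : L, [/\ a \in Fq q, b \in Fq q, (a, b) != (0, 0) & a * y + b * z = 0].

Definition scattered (q n : nat) (a : 'I_n -> L) : Prop :=
  forall y z : L, z * qlinpoly q a y - y * qlinpoly q a z = 0 -> Fq_dep q y z.

Definition vec2 (x y : L) : 'rV[L]_2 := \row_(j < 2) (if j == ord0 then x else y).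

Definition Uf (f : L -> L) : {set 'rV[L]_2} := [set vec2 x (f x) | x : L].

Definition Gf (f : L -> L) : {set 'M[L]_2} :=
  [set A : 'M[L]_2 | (A \in unitmx) && ([set v *m A | v in Uf f] == Uf f)].

Definition Gf0 (f : L -> L) : {set 'M[L]_2} := 0 |: Gf f.

Definition ring_iso_to (S : {set 'M[L]_2}) (T : {set L}) : Prop :=
  exists phi : 'M[L]_2 -> L,
    [/\ {in S &, injective phi},
        phi @: S = T,
        {in S &, forall A B, phi (A + B) = phi A + phi B} &
        {in S &, forall A B, phi (A *m B) = phi A * phi B}].

Definition eigenvec (A : 'M[L]_2) (v : 'rV[L]_2) : Prop :=
  v != 0 /\ exists lambda : L, v *m A = lambda *: v.

(* the point <v> of PG(1,q^n) belongs to L_f *)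
Definition in_Lf (f : L -> L) (v : 'rV[L]_2) : Prop :=
  exists x : L, x != 0 /\ exists c : L, c != 0 /\ v = c *: vec2 x (f x).

End Defs.

(* Main.v *)
Require Import Defs.
From HB Require Import structures.
From mathcomp Require Import all_boot all_order all_algebra all_field.
From mathcomp Require Import ring.
Set Implicit Arguments. Unset Strict Implicit. Unset Printing Implicit Defensive.
Import GRing.Theory.
Local Open Scope ring_scope.


Lemma vec2E (L : finFieldType) x y (i : 'I_1) (j : 'I_2) :
  vec2 x y i j = if j == ord0 then x else y :> L.
Proof. by rewrite /vec2 mxE. Qed.

Lemma vec2_inj (L : finFieldType) (x y x' y' : L) :
  vec2 x y = vec2 x' y' -> x = x' /\ y = y'.
Proof.
move/matrixP=> H; split.
  by have := H 0 ord0; rewrite !vec2E eqxx.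
by have := H 0 ord_max; rewrite !vec2E.
Qed.

Lemma scale_vec2 (L : finFieldType) (c x y : L) : c *: vec2 x y = vec2 (c * x) (c * y).
Proof. by apply/matrixP=> i j; rewrite mxE !vec2E; case: ifP. Qed.

Lemma ord2P (j : 'I_2) : j = ord0 \/ j = ord_max.
Proof.
case: j => [[|[|//]] Hj]; [left|right]; exact: val_inj.
Qed.

Lemma mul_vec2 (L : finFieldType) (x y : L) (M : 'M[L]_2) :
  vec2 x y *m M = vec2 (x * M ord0 ord0 + y * M ord_max ord0)
                       (x * M ord0 ord_max + y * M ord_max ord_max).
Proof.
apply/matrixP=> i j; rewrite !mxE !big_ord_recl big_ord0 addr0 !vec2E /=.
have -> : lift ord0 ord0 = ord_max :> 'I_2 by apply: val_inj.
by case: (ord2P j) => ->.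
Qed.

Lemma mx2_eq (L : finFieldType) (M N : 'M[L]_2) :
  M ord0 ord0 = N ord0 ord0 -> M ord0 ord_max = N ord0 ord_max ->
  M ord_max ord0 = N ord_max ord0 -> M ord_max ord_max = N ord_max ord_max -> M = N.
Proof.
move=> h1 h2 h3 h4; apply/matrixP=> i j.
by case: (ord2P i) => ->; case: (ord2P j) => ->.
Qed.


Lemma FqE (L : finFieldType) q x : (x \in Fq L q) = (x ^+ q == x).
Proof. by rewrite inE. Qed.

Lemma Fq_pow (L : finFieldType) q c i : c \in Fq L q -> c ^+ (q ^ i) = c.
Proof.
rewrite FqE => /eqP hc; elim: i => [|i IH]; first by rewrite expn0 expr1.
by rewrite expnS exprM hc.
Qed.

Lemma Fq_dep_mul (L : finFieldType) q (hchar : [pchar L].-nat q) (y0 y : L) :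
  y0 != 0 -> Fq_dep q y0 y -> exists2 c, c \in Fq L q & y = c * y0.
Proof.
move=> hy0 [a [b [ha hb hab e]]].
have hb0 : b != 0.
  apply: contraNneq hab => hb0; move: e; rewrite hb0 mul0r addr0 => /eqP.
  by rewrite mulf_eq0 (negbTE hy0) orbF => /eqP ->.
exists (- (a / b)).
  move: ha hb; rewrite !FqE => /eqP ha /eqP hb.
  by rewrite exprNn_pchar // exprMn exprVn ha hb.
have : y = - (a * y0) / b.
  by rewrite -[RHS]/(- (a * y0) * b^-1) (addr0_eq e) mulrC mulrA mulVf // mul1r.
move->; field; exact: hb0.
Qed.

Lemma card_Fq (L : finFieldType) q : (1 < q)%N -> (#|Fq L q| <= q)%N.
Proof.
move=> hq.
have hs : size ('X^q - 'X : {poly L}) = q.+1.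
  by rewrite size_polyDl ?size_polyXn // size_polyN size_polyX.
have hp0 : ('X^q - 'X : {poly L}) != 0 by rewrite -size_poly_eq0 hs.
have := max_poly_roots hp0 (rs := enum (Fq L q)).
rewrite hs cardE ltnS; apply.
  apply/allP=> x; rewrite mem_enum FqE => /eqP hx.
  by rewrite /root !hornerE hx subrr.
exact: enum_uniq.
Qed.

Lemma card_mul (L : finFieldType) q (S : {set L}) y0 :
  y0 != 0 -> (forall y, y \in S -> exists2 c, c \in Fq L q & y = c * y0) ->
  (#|S| <= #|Fq L q|)%N.
Proof.
move=> hy0 H.
apply: (leq_trans _ (leq_imset_card (fun c => c * y0) _)).
apply: subset_leq_card; apply/subsetP=> y /H [c hc ->]; exact: imset_f.
Qed.

Lemma card_dep (L : finFieldType) q (hq : (0 < q)%N) (hchar : [pchar L].-nat q) (S : {set L}) :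
  (forall y y', y \in S -> y' \in S -> Fq_dep q y y') -> (#|S| <= #|Fq L q|)%N.
Proof.
move=> H.
case: (pickP [pred y in S | y != 0]) => [y0 /andP [hy0S hy0] | hn].
  apply: (card_mul hy0) => y hy; apply: Fq_dep_mul => //; exact: H.
apply: (@leq_trans 1).
  rewrite -(cards1 (0 : L)); apply: subset_leq_card; apply/subsetP=> y hy.
  by have := hn y; rewrite /= hy /= => /negbFE /eqP ->; rewrite inE.
by apply/card_gt0P; exists 1; rewrite FqE expr1n.
Qed.


Lemma f_scal (L : finFieldType) q n (a : 'I_n -> L) c x :
  c \in Fq L q -> qlinpoly q a (c * x) = c * qlinpoly q a x.
Proof.
move=> hc; rewrite /qlinpoly mulr_sumr; apply: eq_bigr => i _.
by rewrite exprMn Fq_pow // mulrCA.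
Qed.

Lemma f_sub (L : finFieldType) q n (a : 'I_n -> L) (hchar : [pchar L].-nat q) x y :
  qlinpoly q a (x - y) = qlinpoly q a x - qlinpoly q a y.
Proof.
rewrite /qlinpoly -sumrB; apply: eq_bigr => i _.
have hi : [pchar L].-nat (q ^ i)%N by rewrite pnatX hchar.
by rewrite exprDn_pchar // exprNn_pchar // mulrBr.
Qed.

Lemma qlin0 (L : finFieldType) q n (a : 'I_n -> L) (hchar : [pchar L].-nat q) :
  qlinpoly q a 0 = 0.
Proof. by have := f_sub a hchar 0 0; rewrite !subrr. Qed.

Lemma Gf_mem (L : finFieldType) (f : L -> L) M x :
  M \in Gf f -> exists y, vec2 x (f x) *m M = vec2 y (f y).
Proof.
rewrite inE => /andP [_ /eqP E].
have : vec2 x (f x) *m M \in [set v *m M | v in Uf f].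
  by apply: imset_f; apply: imset_f.
by rewrite E => /imsetP [y _ ->]; exists y.
Qed.

Lemma eig_Fq (L : finFieldType) q n (a : 'I_n -> L) (hchar : [pchar L].-nat q)
  (hscat : scattered q a) x0 (hx0 : x0 != 0) M lam :
  M \in Gf (qlinpoly q a) ->
  vec2 x0 (qlinpoly q a x0) *m M = lam *: vec2 x0 (qlinpoly q a x0) ->
  lam \in Fq L q.
Proof.
move=> hM hw; have [y hy] := Gf_mem x0 hM.
move: hy; rewrite hw scale_vec2 => /vec2_inj [hy1 hy2].
have : Fq_dep q x0 (lam * x0).
  apply: hscat; rewrite hy1 -hy2 -hy1; ring.
case/(Fq_dep_mul hchar hx0) => c hc /(mulIf hx0) ->; exact: hc.
Qed.


Lemma card_ker_img (L : finFieldType) (g : L -> L) (hg : forall x y, g (x - y) = g x - g y) :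
  (#|L| <= #|[set g x | x : L]| * #|[set x | g x == 0%R]|)%N.
Proof.
pose s y := odflt 0 [pick x | g x == y].
have hs x : g (s (g x)) = g x.
  rewrite /s; case: pickP => [x' /eqP -> //|H].
  by have := H x; rewrite eqxx.
pose phi x := (g x, x - s (g x)).
have phi_inj : injective phi.
  move=> x x' [e1 e2]; move: e2; rewrite e1 => /addIr; done.
rewrite -cardsX -cardsT -(card_imset _ phi_inj).
apply: subset_leq_card; apply/subsetP => _ /imsetP [x _ ->].
rewrite inE /=; apply/andP; split; first exact: imset_f.
by rewrite inE hg hs subrr.
Qed.


Lemma Fq0 (L : finFieldType) q : (0 < q)%N -> (0 : L) \in Fq L q.
Proof. by rewrite FqE; case: q => // q _; rewrite expr0n. Qed.

Lemma Fq1 (L : finFieldType) q : (1 : L) \in Fq L q.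
Proof. by rewrite FqE expr1n. Qed.

Lemma Gf_scalar (L : finFieldType) q n (a : 'I_n -> L) (hq : (1 < q)%N)
  (hchar : [pchar L].-nat q) (hcard : #|L| = (q ^ n)%N) (hn : (2 < n)%N)
  (hscat : scattered q a) x0 (hx0 : x0 != 0) M lam :
  M \in Gf (qlinpoly q a) ->
  vec2 x0 (qlinpoly q a x0) *m M = lam *: vec2 x0 (qlinpoly q a x0) ->
  M = lam%:M.
Proof.
move=> hM hw.
have hlam := eig_Fq hchar hscat hx0 hM hw.
move: hw; rewrite mul_vec2 scale_vec2 => /vec2_inj [w1 w2].
set f := qlinpoly q a in w1 w2 hscat *.
set f0 := f x0 in w1 w2 *.
set al := M ord0 ord0 in w1 w2 *.
set be := M ord0 ord_max in w1 w2 *.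
set ga := M ord_max ord0 in w1 w2 *.
set de := M ord_max ord_max in w1 w2 *.
have hx x : f (x * al + f x * ga) = x * be + f x * de.
  have [y] := Gf_mem x hM; rewrite mul_vec2 => /vec2_inj [-> ->] //.
pose g x := x * f0 - x0 * f x.
pose r1 := - ga / x0.
pose r2 := (lam - de) / x0.
have hal : al = (lam * x0 - f0 * ga) / x0 by rewrite -w1; field.
have hbe : be = (lam * f0 - f0 * de) / x0 by rewrite -w2; field.
have hr x : f (r1 * g x) = r2 * g x.
  have -> : r1 * g x = (x * al + f x * ga) - lam * x.
    by rewrite /r1 /g hal; field.
  by rewrite /f f_sub // f_scal // -/f hx hbe /r2 /g; field.
have hg u v : g (u - v) = g u - g v by rewrite /g /f f_sub //; ring.
have [r10 r20] : r1 = 0 /\ r2 = 0.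
{ case: (eqVneq r1 0) => [r10|hr1]; case: (eqVneq r2 0) => [r20|hr2] //; exfalso.
  all: have hdep : forall z z', Fq_dep q (g z) (g z').
  1: { move=> x x'.
    have gx0 z : g z = 0.
      have := hr z; rewrite r10 mul0r /f qlin0 // => /esym /eqP.
      by rewrite mulf_eq0 (negbTE hr2) /= => /eqP.
    exists 1, 0; split; [exact: Fq1 | exact: Fq0 (ltnW hq) | | by rewrite gx0; ring].
    by rewrite xpair_eqE oner_eq0. }
  2,4: move=> x x'; have := hscat (r1 * g x) (r1 * g x');
       (have : r1 * g x' * f (r1 * g x) - r1 * g x * f (r1 * g x') = 0 by rewrite !hr; ring);
       move=> h /(_ h) [c [d [hc hd hcd e]]]; exists c, d; split => //;
       (have : (c * g x + d * g x') * r1 = 0 by rewrite -e; ring);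
       by move/eqP; rewrite mulf_eq0 (negbTE hr1) orbF => /eqP.
  all: have hk : (#|[set x | g x == 0%R]| <= #|Fq L q|)%N by
         apply: (card_mul hx0) => y; rewrite inE => /eqP hy;
         apply: Fq_dep_mul => //; apply: hscat; exact: hy.
  all: have hi : (#|[set g x | x : L]| <= #|Fq L q|)%N by
         apply: card_dep => //; [exact: ltnW | move=> y y' /imsetP [x _ ->] /imsetP [x' _ ->]; exact: hdep].
  all: have := leq_trans (card_ker_img hg) (leq_mul (leq_trans hi (card_Fq L hq)) (leq_trans hk (card_Fq L hq)));
       rewrite hcard mulnn.
  all: move/(leq_trans (leq_pexp2l (ltnW hq) hn)); rewrite leq_exp2l //. }
have hga : ga = 0.
  have -> : ga = - (r1 * x0) by rewrite /r1; field.
  by rewrite r10 mul0r oppr0.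
have hde : de = lam.
  have -> : de = lam - r2 * x0 by rewrite /r2; field.
  by rewrite r20 mul0r subr0.
apply: mx2_eq; rewrite !mxE /= -/al -/be -/ga -/de ?mulr1n ?mulr0n.
- by rewrite hal hga mulr0 subr0; field.
- by rewrite hbe hde [lam * _]mulrC subrr mul0r.
- by rewrite hga.
- by rewrite hde.
Qed.


Lemma f2 (L : finFieldType) q (a : 'I_2 -> L) x :
  qlinpoly q a x = a ord0 * x + a ord_max * x ^+ q.
Proof.
rewrite /qlinpoly !big_ord_recl big_ord0 /= expn0 expn1 expr1 addr0.
by have -> : lift ord0 ord0 = ord_max :> 'I_2 by apply: val_inj.
Qed.

Lemma n2_contra (L : finFieldType) q (a : 'I_2 -> L) (hq : (1 < q)%N)
  (hchar : [pchar L].-nat q) (hcard : #|L| = (q ^ 2)%N)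
  (hscat : scattered q a) x0 (hx0 : x0 != 0) :
  (forall A, A \in Gf (qlinpoly q a) -> exists lam,
     vec2 x0 (qlinpoly q a x0) *m A = lam *: vec2 x0 (qlinpoly q a x0)) -> False.
Proof.
move=> H.
have /subsetPn [xi _ hxi] : ~~ ([set: L] \subset Fq L q).
  apply/negP => /subset_leq_card; rewrite cardsT hcard => h.
  have := leq_trans h (card_Fq L hq).
  by rewrite -{2}(expn1 q) leq_exp2l.
have hxi0 : xi != 0 by apply: contraNneq hxi => ->; exact: Fq0 (ltnW hq).
pose A : 'M[L]_2 := \matrix_(i < 2, j < 2)
  if i == ord0 then (if j == ord0 then xi else a ord0 * (xi - xi ^+ q))
  else (if j == ord0 then 0 else xi ^+ q).
have key x : qlinpoly q a (xi * x) = x * (a ord0 * (xi - xi ^+ q)) + qlinpoly q a x * xi ^+ q.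
  by rewrite !f2 exprMn; ring.
have hA : A \in Gf (qlinpoly q a).
  rewrite inE; apply/andP; split.
    rewrite unitmxE -det_tr det_trig.
      rewrite !big_ord_recl big_ord0 !mxE /=.
      by rewrite /= mulr1 unitfE mulf_neq0 // expf_neq0.
    apply/is_trig_mxP => i j; case: (ord2P i) => ->; case: (ord2P j) => -> //.
    by rewrite !mxE.
  apply/eqP/setP => v; apply/idP/idP.
    case/imsetP => u /imsetP [x _ ->] ->; rewrite mul_vec2 !mxE /=.
    apply/imsetP; exists (xi * x) => //; rewrite key; congr vec2; ring.
  case/imsetP => y _ ->; apply/imsetP; exists (vec2 (y / xi) (qlinpoly q a (y / xi))).
    exact: imset_f.
  rewrite mul_vec2 !mxE /= -key; congr vec2; last congr qlinpoly; field; exact: hxi0.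
have [lam hlam] := H A hA.
have hlF := eig_Fq hchar hscat hx0 hA hlam.
move: hlam; rewrite mul_vec2 scale_vec2 !mxE /= => /vec2_inj [e1 _].
have : xi = lam by apply: (mulIf hx0); rewrite -e1; ring.
by move=> e; move: hxi; rewrite e hlF.
Qed.


Lemma scal_Gf (L : finFieldType) q n (a : 'I_n -> L) y :
  y \in Fq L q -> y%:M \in Gf0 (qlinpoly q a).
Proof.
move=> hy; rewrite in_setU1; case: (eqVneq y 0) => [->|hy0].
  by apply/orP; left; apply/eqP/matrixP => i j; rewrite !mxE mul0rn.
apply/orP; right; rewrite inE; apply/andP; split.
  by rewrite unitmxE det_scalar unitfE expf_neq0.
apply/eqP/setP => v; apply/idP/idP.
  case/imsetP => u /imsetP [x _ ->] ->; rewrite mul_mx_scalar scale_vec2 -f_scal //.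
  exact: imset_f.
case/imsetP => z _ ->; apply/imsetP; exists (vec2 (z / y) (qlinpoly q a (z / y))).
  exact: imset_f.
rewrite mul_mx_scalar scale_vec2 -f_scal // mulrC divfK //.
Qed.

Lemma key_v (L : finFieldType) q n (a : 'I_n -> L) (hq : (1 < q)%N)
  (hchar : [pchar L].-nat q) (hcard : #|L| = (q ^ n)%N) (hn : (1 < n)%N)
  (hscat : scattered q a) (v : 'rV[L]_2)
  (heig : forall A : 'M[L]_2, A \in Gf (qlinpoly q a) -> eigenvec A v)
  (hnoiso : ~ ring_iso_to (Gf0 (qlinpoly q a)) (Fq L q)) :
  ~ in_Lf (qlinpoly q a) v.
Proof.
move=> [x0 [hx0 [c [hc hv]]]].
have H A : A \in Gf (qlinpoly q a) -> exists lam,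
     vec2 x0 (qlinpoly q a x0) *m A = lam *: vec2 x0 (qlinpoly q a x0).
  move=> hA; have [_ [lam hl]] := heig A hA; exists lam.
  apply: (scalerI hc); rewrite scalemxAl -hv hl hv !scalerA mulrC //.
have hn3 : (2 < n)%N.
  case: (ltngtP n 2) => [hlt|//|e].
    by move: hn; rewrite ltnNge -ltnS hlt.
  subst n; case: (n2_contra hq hchar hcard hscat hx0 H).
have Hs A : A \in Gf0 (qlinpoly q a) -> exists2 mu, mu \in Fq L q & A = mu%:M.
  rewrite in_setU1 => /orP [/eqP ->|hA].
    exists 0; first exact: Fq0 (ltnW hq).
    by apply/matrixP => i j; rewrite !mxE mul0rn.
  have [lam hl] := H A hA.
  exists lam; first exact: (eig_Fq hchar hscat hx0 hA hl).
  exact: (Gf_scalar hq hchar hcard hn3 hscat hx0 hA hl).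
apply: hnoiso; exists (fun A => A ord0 ord0); split.
- move=> A B /Hs [mu _ ->] /Hs [nu _ ->]; rewrite !mxE !mulr1n => ->; done.
- apply/setP => y; apply/imsetP/idP.
    by case=> A /Hs [mu hmu ->] ->; rewrite mxE mulr1n.
  by move=> hy; exists y%:M; [exact: scal_Gf | rewrite mxE mulr1n].
- by move=> A B _ _; rewrite mxE.
- move=> A B /Hs [mu _ ->] /Hs [nu _ ->]; rewrite -scalar_mxM !mxE !mulr1n //.
Qed.

Unset Implicit Arguments. Set Strict Implicit.

Theorem proposition3p15 (L : finFieldType) (q n : nat)
  (hq : (1 < q)%N) (hqpp : exists p k : nat, prime p /\ q = (p ^ k)%N)
  (hn : (1 < n)%N) (hcard : #|L| = (q ^ n)%N)
  (a : 'I_n -> L) (hscat : scattered q a)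
  (v1 v2 : 'rV[L]_2) (hv1 : v1 != 0) (hv2 : v2 != 0)
  (heig1 : forall A : 'M[L]_2, A \in Gf (qlinpoly q a) -> eigenvec A v1)
  (heig2 : forall A : 'M[L]_2, A \in Gf (qlinpoly q a) -> eigenvec A v2)
  (hnoiso : ~ ring_iso_to (Gf0 (qlinpoly q a)) (Fq L q)) :
  ~ in_Lf (qlinpoly q a) v1 /\ ~ in_Lf (qlinpoly q a) v2.
Proof.
have hchar : [pchar L].-nat q.
  have [p [k [pp hqk]]] := hqpp.
  have hp : p \in [pchar L].
    by apply: card_finPcharP pp; rewrite hcard hqk -expnM.
  by rewrite hqk pnatX (pnatE _ pp) hp.
by split; apply: key_v.
Qed.
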